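(* Let $\alpha>0$, $\beta,\eta,\kappa\in\mathbb{R}$, $\rho>0$, $p\geq 1$, and $0\le a<x$. Let $f,g$ be two positive functions on $[0,\infty)$ with $f,g\in X^{p}_{c}(a,x)$ (for some $c\in\mathbb{R}$), such that ${}^{\rho}\mathcal{I}^{\alpha,\beta}_{a+,\eta,\kappa}f^{p}(x)<\infty$ and ${}^{\rho}\mathcal{I}^{\alpha,\beta}_{a+,\eta,\kappa}g^{p}(x)<\infty$. Suppose there are real numbers $m,M$ and $\gamma$ with $0<\gamma<m\leq \frac{f(t)}{g(t)}\leq M$ for all $t\in[a,x]$. Then $$\frac{M+1}{M-\gamma}\left({}^{\rho}\mathcal{I}^{\alpha,\beta}_{a+,\eta,\kappa}(f-\gamma g)^{p}(x)\right)^{1/p}\leq\left({}^{\rho}\mathcal{I}^{\alpha,\beta}_{a+,\eta,\kappa}f^{p}(x)\right)^{1/p}+\left({}^{\rho}\mathcal{I}^{\alpha,\beta}_{a+,\eta,\kappa}g^{p}(x)\right)^{1/p}\leq\frac{m+1}{m-\gamma}\left({}^{\rho}\mathcal{I}^{\alpha,\beta}_{a+,\eta,\kappa}(f-\gamma g)^{p}(x)\right)^{1/p}.$$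
   Context: For $c\in\mathbb{R}$ and $1\le p<\infty$, $X^{p}_{c}(a,b)$ denotes the space of Lebesgue measurable functions $f$ on $(a,b)$ with $\left(\int_a^b |t^{c}f(t)|^{p}\,\frac{dt}{t}\right)^{1/p}<\infty$. For $\alpha>0$, $\beta,\eta,\kappa\in\mathbb{R}$, $\rho>0$, $0\le a<x$, and a function $\varphi$, the generalized (Katugampola) fractional integral is $${}^{\rho}\mathcal{I}^{\alpha,\beta}_{a+,\eta,\kappa}\varphi(x)=\frac{\rho^{1-\beta}x^{\kappa}}{\Gamma(\alpha)}\int_{a}^{x}\frac{\tau^{\rho(\eta+1)-1}}{(x^{\rho}-\tau^{\rho})^{1-\alpha}}\varphi(\tau)\,d\tau,$$ whenever the integral exists. ${}^{\rho}\mathcal{I}^{\alpha,\beta}_{a+,\eta,\kappa}(f-\gamma g)^{p}(x)$ means the operator applied to $\tau\mapsto (f(\tau)-\gamma g(\tau))^p$, evaluated at $x$. *)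

(* Defs.v *)
From HB Require Import structures.
From mathcomp Require Import all_boot all_order all_algebra.
From mathcomp Require Import all_classical all_reals all_analysis.
Set Implicit Arguments. Unset Strict Implicit. Unset Printing Implicit Defensive.
Import Order.TTheory GRing.Theory Num.Theory.
Import numFieldNormedType.Exports.
Local Open Scope classical_set_scope.
Local Open Scope ring_scope.

Definition Gamma (R : realType) (a : R) : R :=
  fine (\int[@lebesgue_measure R]_(t in `]0%R, +oo[) ((t `^ (a - 1)) * expR (- t))%:E)%E.

Definition katI (R : realType) (alpha beta eta kappa rho a : R) (phi : R -> R) (x : R) : \bar R :=
  ((rho `^ (1 - beta) * x `^ kappa / Gamma alpha)%:E *
   \int[@lebesgue_measure R]_(tau in `]a, x[)
      ((tau `^ (rho * (eta + 1) - 1)) * (x `^ rho - tau `^ rho) `^ (alpha - 1) * phi tau)%:E)%E.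

Definition Xpc (R : realType) (c p a b : R) (f : R -> R) : Prop :=
  measurable_fun `]a, b[ f /\
  (\int[@lebesgue_measure R]_(t in `]a, b[) ((`| t `^ c * f t | `^ p) / t)%:E < +oo)%E.

(* Main.v *)
Require Import Defs.
From HB Require Import structures.
From mathcomp Require Import all_boot all_order all_algebra.
From mathcomp Require Import all_classical all_reals all_analysis.
From mathcomp Require Import measurable_realfun.
Import Order.TTheory GRing.Theory Num.Theory.
Import numFieldNormedType.Exports.
Local Open Scope classical_set_scope.
Local Open Scope ring_scope.

Definition intg {R : realType} (e rho alpha p x : R) (phi : R -> R) (tau : R) : \bar R :=
  ((tau `^ e) * (x `^ rho - tau `^ rho) `^ (alpha - 1) * powR (phi tau) p)%:E.

Definition J {R : realType} (e rho alpha p a x : R) (phi : R -> R) : \bar R :=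
  (\int[@lebesgue_measure R]_(tau in `]a, x[) intg e rho alpha p x phi tau)%E.

Lemma intg_ge0 {R : realType} (e rho alpha p x : R) phi t : (0 <= intg e rho alpha p x phi t)%E.
Proof. by rewrite lee_fin !mulr_ge0 ?powR_ge0. Qed.

Lemma J_ge0 {R : realType} (e rho alpha p a x : R) phi : (0 <= J e rho alpha p a x phi)%E.
Proof. by apply: integral_ge0 => t _; apply: intg_ge0. Qed.

Lemma measJ {R : realType} (e rho alpha p a x : R) (u : R -> R) :
  measurable_fun `]a, x[ u ->
  measurable_fun `]a, x[ (intg e rho alpha p x u).
Proof.
move=> mu; apply/measurable_EFinP.
apply: measurable_funM; last exact: (measurableT_comp (measurable_powR _) mu).
apply: measurable_funM.
  exact: (measurable_funS _ _ (measurable_powR e)).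
apply: (measurableT_comp (measurable_powR _)).
apply: measurable_funB => //.
exact: (measurable_funS _ _ (measurable_powR rho)).
Qed.

Lemma keyJ {R : realType} (e rho alpha p a x k : R) (u v : R -> R) :
  0 <= k -> 0 <= p ->
  measurable_fun `]a, x[ u -> measurable_fun `]a, x[ v ->
  (forall t, a < t < x -> 0 <= v t /\ 0 <= u t <= k * v t) ->
  (J e rho alpha p a x u <= (k `^ p)%:E * J e rho alpha p a x v)%E.
Proof.
move=> k0 p0 mu mv huv.
have -> : ((k `^ p)%:E * J e rho alpha p a x v = \int[@lebesgue_measure R]_(tau in `]a, x[) ((k `^ p)%:E * intg e rho alpha p x v tau))%E.
  rewrite /J ge0_integralZl_EFin //.
  - by move=> t _; apply: intg_ge0.
  - exact: measJ.
  - exact: powR_ge0.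
apply: ge0_le_integral => //.
- by move=> t _; apply: intg_ge0.
- exact: measJ.
- apply: measurable_funeM; exact: measJ.
move=> t; rewrite /= in_itv /= => /huv [vv0 /andP[u0 uk]].
have v0 : 0 <= k * v t by apply: le_trans uk.
rewrite /intg lee_fin mulrCA ler_wpM2l ?mulr_ge0 ?powR_ge0 //.
rewrite -powRM //.
by apply: ge0_ler_powR.
Qed.

Lemma fin_bound {R : realType} (C k p : R) (Ju Jv : \bar R) :
  0 <= C -> 0 <= k -> 0 < p -> (0 <= Ju)%E -> (0 <= Jv)%E ->
  (Ju <= (k `^ p)%:E * Jv)%E -> (C%:E * Jv < +oo)%E ->
  (C%:E * Ju < +oo)%E /\
  fine (C%:E * Ju) `^ p^-1 <= k * fine (C%:E * Jv) `^ p^-1.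
Proof.
move=> C0 k0 p0 Ju0 Jv0 hle hfin.
have B0 : (0 <= C%:E * Jv)%E by apply: mule_ge0.
have A0 : (0 <= C%:E * Ju)%E by apply: mule_ge0.
have hA : (C%:E * Ju <= (k `^ p)%:E * (C%:E * Jv))%E.
  by rewrite muleCA; apply: lee_wpmul2l => //; rewrite lee_fin.
move: hA hfin A0 B0; set A := (C%:E * Ju)%E; set B := (C%:E * Jv)%E.
case: B => [b| |] //; case: A => [a| |] //= hab _ a0 b0.
split; first exact: ltry.
rewrite lee_fin in a0; rewrite lee_fin in b0; rewrite -EFinM lee_fin in hab.
have pi0 : 0 <= p^-1 by rewrite invr_ge0 ltW.
have := @ge0_ler_powR _ _ pi0 a (k `^ p * b).
rewrite !nnegrE a0 mulr_ge0 ?powR_ge0 // => H; apply: (le_trans (H isT isT hab)).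
rewrite powRM ?powR_ge0 // -powRrM mulfV ?gt_eqF // powRr1 //.
Qed.

From mathcomp Require Import lra.

Lemma pt_bounds {R : realType} (F G m M gamma : R) :
  0 < F -> 0 < G -> 0 < gamma -> gamma < m -> m <= F / G <= M ->
  [/\ 0 <= F - gamma * G, F <= m / (m - gamma) * (F - gamma * G),
      G <= 1 / (m - gamma) * (F - gamma * G),
      F - gamma * G <= (M - gamma) / M * F &
      F - gamma * G <= (M - gamma) * G].
Proof.
move=> F0 G0 g0 gm /andP[hm hM].
rewrite ler_pdivlMr // in hm; rewrite ler_pdivrMr // in hM.
have mM : m <= M by rewrite -(ler_pM2r G0); apply: le_trans hM.
have mg : 0 < m - gamma by lra.
have M0 : 0 < M by lra.
split.
- nra.
- by rewrite mulrAC ler_pdivlMr //; nra.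
- by rewrite mulrAC ler_pdivlMr //; nra.
- by rewrite mulrAC ler_pdivlMr //; nra.
- nra.
Qed.

Lemma fin_alg {R : realType} (F G H m M gamma : R) :
  0 < m - gamma -> 0 < M - gamma -> 0 < M ->
  H <= (M - gamma) * G -> H <= (M - gamma) / M * F ->
  F <= m / (m - gamma) * H -> G <= 1 / (m - gamma) * H ->
  (M + 1) / (M - gamma) * H <= F + G /\ F + G <= (m + 1) / (m - gamma) * H.
Proof.
move=> mg Mg M0 HG HF FH GH; split; last first.
  by apply: le_trans (lerD FH GH) _; rewrite -!mulrDl.
rewrite mulrAC ler_pdivlMr // in HF.
rewrite mulrAC ler_pdivrMr //.
nra.
Qed.

Theorem theorem12 (R : realType) (alpha beta eta kappa rho p a x c m M gamma : R)
  (f g : R -> R) :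
  0 < alpha -> 0 < rho -> 1 <= p -> 0 <= a -> a < x ->
  (forall t, 0 <= t -> 0 < f t) -> (forall t, 0 <= t -> 0 < g t) ->
  Xpc c p a x f -> Xpc c p a x g ->
  (katI alpha beta eta kappa rho a (fun t => powR (f t) p) x < +oo)%E ->
  (katI alpha beta eta kappa rho a (fun t => powR (g t) p) x < +oo)%E ->
  0 < gamma -> gamma < m ->
  (forall t, a <= t <= x -> m <= f t / g t <= M) ->
  let IF := fine (katI alpha beta eta kappa rho a (fun t => powR (f t) p) x) in
  let IG := fine (katI alpha beta eta kappa rho a (fun t => powR (g t) p) x) in
  let IH := fine (katI alpha beta eta kappa rho a (fun t => powR (f t - gamma * g t) p) x) in
  (M + 1) / (M - gamma) * powR IH p^-1 <= powR IF p^-1 + powR IG p^-1 /\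
  powR IF p^-1 + powR IG p^-1 <= (m + 1) / (m - gamma) * powR IH p^-1.
Proof.
move=> al0 rho0 p1 a0 ax fpos gpos [mf _] [mg _] finF finG g0 gm hfg IF IG IH.
set e := rho * (eta + 1) - 1.
set C := rho `^ (1 - beta) * x `^ kappa / Gamma alpha.
set h := fun t => f t - gamma * g t.
have C0 : 0 <= C.
  rewrite /C divr_ge0 ?mulr_ge0 ?powR_ge0 //.
  apply: fine_ge0; apply: integral_ge0 => t _.
  by rewrite lee_fin mulr_ge0 ?powR_ge0 ?expR_ge0.
have p0 : 0 < p by lra.
have mh : measurable_fun `]a, x[ h.
  by apply: measurable_funB => //; apply: measurable_funM.
have kE : forall u, katI alpha beta eta kappa rho a (fun t => powR (u t) p) x
   = (C%:E * J e rho alpha p a x u)%E by [].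
have /andP[ma aM] : m <= f a / g a <= M by apply: hfg; rewrite lexx (ltW ax).
have mM : m <= M := le_trans ma aM.
have pt : forall t, a < t < x -> [/\ 0 <= h t, f t <= m / (m - gamma) * h t,
      g t <= 1 / (m - gamma) * h t,
      h t <= (M - gamma) / M * f t & h t <= (M - gamma) * g t].
  move=> t /andP[hat tx].
  have t0 : 0 <= t by apply: le_trans (ltW hat).
  apply: pt_bounds => //; [exact: fpos|exact: gpos|apply: hfg; rewrite (ltW hat) (ltW tx) //].
have fp t : a < t < x -> 0 < f t.
  by move=> /andP[hat _]; apply: fpos; apply: le_trans (ltW hat).
have gp t : a < t < x -> 0 < g t.
  by move=> /andP[hat _]; apply: gpos; apply: le_trans (ltW hat).
have mgp : 0 < m - gamma by rewrite subr_gt0.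
have Mgp : 0 < M - gamma by rewrite subr_gt0; apply: lt_le_trans mM.
have M0 : 0 < M by apply: (lt_trans Mgp); rewrite ltrBlDr ltrDl.
have m0 : 0 < m := lt_trans g0 gm.
have [finH HG] := @fin_bound _ C (M - gamma) p _ _ C0 (ltW Mgp) p0 (J_ge0 _ _ _ _ _ _ _) (J_ge0 _ _ _ _ _ _ _)
  (@keyJ _ e rho alpha p a x _ _ _ (ltW Mgp) (ltW p0) mh mg
    (fun t ht => let: And5 h0 _ _ _ hd := pt t ht in conj (ltW (gp t ht)) (introT andP (conj h0 hd)))) finG.
have [_ HF] := @fin_bound _ C ((M - gamma) / M) p _ _ C0 (ltW (divr_gt0 Mgp M0)) p0 (J_ge0 _ _ _ _ _ _ _) (J_ge0 _ _ _ _ _ _ _)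
  (@keyJ _ e rho alpha p a x _ _ _ (ltW (divr_gt0 Mgp M0)) (ltW p0) mh mf
    (fun t ht => let: And5 h0 _ _ hc _ := pt t ht in conj (ltW (fp t ht)) (introT andP (conj h0 hc)))) finF.
have [_ FH] := @fin_bound _ C (m / (m - gamma)) p _ _ C0 (ltW (divr_gt0 m0 mgp)) p0 (J_ge0 _ _ _ _ _ _ _) (J_ge0 _ _ _ _ _ _ _)
  (@keyJ _ e rho alpha p a x _ _ _ (ltW (divr_gt0 m0 mgp)) (ltW p0) mf mh
    (fun t ht => let: And5 h0 ha _ _ _ := pt t ht in conj h0 (introT andP (conj (ltW (fp t ht)) ha)))) finH.
have [_ GH] := @fin_bound _ C (1 / (m - gamma)) p _ _ C0 (ltW (divr_gt0 ltr01 mgp)) p0 (J_ge0 _ _ _ _ _ _ _) (J_ge0 _ _ _ _ _ _ _)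
  (@keyJ _ e rho alpha p a x _ _ _ (ltW (divr_gt0 ltr01 mgp)) (ltW p0) mg mh
    (fun t ht => let: And5 h0 _ hb _ _ := pt t ht in conj h0 (introT andP (conj (ltW (gp t ht)) hb)))) finH.
have eF : IF = fine (C%:E * J e rho alpha p a x f) := erefl.
have eG : IG = fine (C%:E * J e rho alpha p a x g) := erefl.
have eH : IH = fine (C%:E * J e rho alpha p a x h) := erefl.
rewrite eF eG eH.
exact: (fin_alg _ _ _ _ _ _ mgp Mgp M0 HG HF FH GH).
Qed.
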